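(* Let $R$ be a ringed tree with at least $\ell+1$ levels, where $\ell\ge 2$, and let $u_1,u_2,\dots,u_{2^\ell}$ be the vertices of level $\ell$ in their cyclic order along the level-$\ell$ cycle. Then for every tree decomposition $(T,\phi)$ of $R$ there exist a node $w\in V(T)$ and indices $i<j$ with $u_i,u_j\in\phi^{-1}(w)$ and $\min\{j-i,\ 2^\ell+i-j\}\ge 2^{\ell-2}$.
   Context: A ringed tree with levels $0,1,\dots,L$ has vertices $v_{k,j}$ for $0\le k\le L$, $1\le j\le 2^k$; its edges are the edges of the complete binary tree ($v_{k,j}$ adjacent to $v_{k+1,2j-1}$ and $v_{k+1,2j}$) together with, for each level $k$, the cycle $v_{k,1}v_{k,2}\cdots v_{k,2^k}v_{k,1}$ joining consecutive vertices of that level. A tree decomposition of a graph $H$ is a pair $(T,\phi)$ where $T$ is a tree and $\phi$ assigns to each vertex $x$ of $H$ a (nonempty) subtree $\phi(x)$ of $T$ such that $\phi(x)\cap\phi(y)\ne\emptyset$ whenever $xy\in E(H)$; for a node $t$ of $T$, $\phi^{-1}(t)=\{x\in V(H): t\in\phi(x)\}$. *)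

(* Defs.v *)
From mathcomp Require Import all_boot.
Set Implicit Arguments. Unset Strict Implicit. Unset Printing Implicit Defensive.

(* Vertices of the ringed tree with levels 0..L are encoded as pairs (k, j)
   of naturals, 0-indexed in j: (k, j) stands for v_{k, j+1}.  A pair is a
   vertex iff k <= L and j < 2^k. *)
Definition rt_vertex (L : nat) (x : nat * nat) : bool :=
  (x.1 <= L) && (x.2 < 2 ^ x.1).

(* Directed version of the edges: binary tree edges (v_{k,j} -> its two
   children) and level-cycle edges (v_{k,j} -> v_{k,j+1 mod 2^k}). *)
Definition rt_edge_dir (x y : nat * nat) : bool :=
  ((y.1 == x.1.+1) && ((y.2 == 2 * x.2) || (y.2 == (2 * x.2).+1)))
  || ((y.1 == x.1) && (y.2 == x.2.+1 %% 2 ^ x.1)).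

Definition rt_adj (L : nat) (x y : nat * nat) : bool :=
  [&& rt_vertex L x, rt_vertex L y & (rt_edge_dir x y || rt_edge_dir y x)].

Definition is_tree (T : finType) (e : rel T) : Prop :=
  [/\ 0 < #|T|,
      (forall x, ~~ e x x),
      (forall x y, e x y = e y x),
      (forall x y, connect e x y) &
      (forall p : seq T, uniq p -> 3 <= size p -> ~~ cycle e p)].

Definition induced (T : finType) (e : rel T) (S : {set T}) : rel T :=
  [rel a b | [&& e a b, a \in S & b \in S]].

Definition is_subtree (T : finType) (e : rel T) (S : {set T}) : Prop :=
  S != set0 /\ (forall x y, x \in S -> y \in S -> connect (induced e S) x y).

Definition tree_decomp (L : nat) (T : finType) (e : rel T)
    (phi : nat * nat -> {set T}) : Prop :=
  [/\ is_tree e,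
      (forall x, rt_vertex L x -> is_subtree e (phi x)) &
      (forall x y, rt_adj L x y -> phi x :&: phi y != set0)].

(* Main.v *)
Require Import Defs.
From mathcomp Require Import all_boot zify.
Set Implicit Arguments. Unset Strict Implicit. Unset Printing Implicit Defensive.

Lemma rev_path_sym (T : eqType) (e : rel T) (sym : forall x y, e x y = e y x)
  x s z : path e x (rcons s z) -> path e z (rev (x :: s)).
Proof.
move=> H; have := rev_path e x (rcons s z).
rewrite last_rcons belast_rcons => ->.
by rewrite (eq_path (e' := e)) // => a b; rewrite sym.
Qed.

Lemma split_first (T : eqType) (P : pred T) (p : seq T) : has P p ->
  exists p1 z p2, [/\ p = p1 ++ z :: p2, ~~ has P p1 & P z].
Proof.
elim: p => [//|a p IH] /=; case Pa: (P a) => /=.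
  by move=> _; exists [::], a, p.
by case/IH=> p1 [z [p2 [-> h1 h2]]]; exists (a :: p1), z, p2; rewrite /= Pa.
Qed.

Lemma nocross (T : eqType) (e : rel T) (sym : forall x y, e x y = e y x)
  (acyc : forall p : seq T, uniq p -> 3 <= size p -> ~~ cycle e p)
  x p1 z p2 q1 q2 :
  path e x (p1 ++ z :: p2) -> path e x (q1 ++ z :: q2) ->
  uniq (x :: p1 ++ z :: p2) -> uniq (x :: q1 ++ z :: q2) ->
  ~~ has (mem (q1 ++ z :: q2)) p1 -> (p1 != [::]) || (q1 != [::]) -> False.
Proof.
move=> Hp Hq Up Uq Hd Hne.
have Hc : cycle e (x :: p1 ++ z :: rev q1).
  rewrite /= rcons_cat /= -rev_cons cat_path /=.
  move: Hp; rewrite cat_path /= => /and3P[-> -> _].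
  apply: rev_path_sym => //; rewrite rcons_path.
  by move: Hq; rewrite cat_path /= => /and3P[-> -> _].
apply: (negP (acyc _ _ _)) Hc.
  move: Up Uq Hd; rewrite /= !mem_cat !inE !cat_uniq /= !mem_rev rev_uniq has_rev.
  move=> /and5P[/norP[xp1 /norP[xz _]] up1 /norP[zp1 _] _ _].
  move=> /and5P[/norP[xq1 _] uq1 /norP[zq1 _] _ _] Hd.
  have hp1q1 : ~~ has (mem p1) q1.
    apply/hasPn => t tq1; apply/negP => tp1.
    by move/hasPn: Hd => /(_ t tp1) /negP; apply; rewrite /= mem_cat tq1.
  by rewrite (negbTE xp1) (negbTE xz) (negbTE xq1) up1 (negbTE zp1) uq1 (negbTE zq1) (negbTE hp1q1).
rewrite /= size_cat /= size_rev.
move: Hne; rewrite -!size_eq0; lia.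
Qed.


Lemma in_split (T : eqType) (x : T) s : x \in s -> exists s1 s2, s = s1 ++ x :: s2.
Proof. by case/splitPr => s1 s2; exists s1, s2. Qed.

Lemma upath (T : eqType) (e : rel T) (sym : forall x y, e x y = e y x)
  (acyc : forall p : seq T, uniq p -> 3 <= size p -> ~~ cycle e p) p :
  forall x q, path e x p -> path e x q -> uniq (x :: p) -> uniq (x :: q) ->
  last x p = last x q -> p = q.
Proof.
elim: p => [|a p IH] x [|b q] //=.
- move=> _ _ _ /andP[xq _] E; exfalso; move: xq; rewrite E.
  by rewrite mem_last.
- move=> _ _ /andP[xp _] _ E; exfalso; move: xp; rewrite -E.
  by rewrite mem_last.
move=> /andP[exa pa] /andP[exb pb] Up Uq Hl.
case: (eqVneq a b) => [Eab|nab].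
  subst b; congr (_ :: _); apply: (IH a) => //.
  - by case/andP: Up.
  - by case/andP: Uq.
exfalso.
have hP : has (mem (b :: q)) (a :: p).
  apply/hasP; exists (last a p); first exact: mem_last.
  by rewrite /= Hl mem_last.
have [p1 [z [p2 [EP Hd zQ]]]] := split_first hP.
have [q1 [q2 EQ]] := in_split zQ.
apply: (nocross sym acyc (x := x) (p1 := p1) (z := z) (p2 := p2) (q1 := q1) (q2 := q2)).
- by rewrite -EP /= exa.
- by rewrite -EQ /= exb.
- by rewrite -EP.
- by rewrite -EQ.
- by rewrite -EQ.
- case: p1 EP {Hd} => [|? ?] //= EP; case: q1 EQ => [|? ?] //= EQ.
  by case: EP => Ea _; case: EQ => Eb _; rewrite Ea Eb eqxx in nab.
Qed.

Definition conn (T : finType) (e : rel T) (S : {set T}) :=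
  forall x y, x \in S -> y \in S -> connect (induced e S) x y.

Lemma ind_path (T : finType) (e : rel T) (S : {set T}) x p :
  path (induced e S) x p -> path e x p && all (mem S) p.
Proof.
elim: p x => [|a p IH] x //= /andP[/and3P[-> _ aS] /IH /andP[-> ->]].
by rewrite aS.
Qed.

Lemma exists_path (T : finType) (e : rel T) (S : {set T}) x y :
  conn e S -> x \in S -> y \in S ->
  exists p, [/\ path e x p, last x p = y, uniq (x :: p) & all (mem S) p].
Proof.
move=> cS xS yS; case/connectP: (cS x y xS yS) => p Hp ->.
case: (shortenP Hp) => p' Hp' Up' _.
case/andP: (ind_path Hp') => H1 H2.
by exists p'.
Qed.

Lemma in_path (T : finType) (e : rel T) (sym : forall x y, e x y = e y x)
  (acyc : forall p : seq T, uniq p -> 3 <= size p -> ~~ cycle e p)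
  (S : {set T}) x q :
  conn e S -> x \in S -> last x q \in S -> path e x q -> uniq (x :: q) ->
  all (mem S) q.
Proof.
move=> cS xS yS Hq Uq.
have [p [Hp Lp Up Ap]] := exists_path cS xS yS.
by rewrite -(upath sym acyc Hp Hq Up Uq Lp).
Qed.

Lemma conn_lift (T : finType) (e : rel T) (A B : {set T}) x y :
  A \subset B -> connect (induced e A) x y -> connect (induced e B) x y.
Proof.
move=> sAB; apply: connect_sub => u v /= /and3P[euv uA vA].
by apply: connect1; rewrite /induced /= euv (subsetP sAB _ uA) (subsetP sAB _ vA).
Qed.

Lemma conn_union (T : finType) (e : rel T) (A B : {set T}) c :
  conn e A -> conn e B -> c \in A -> c \in B -> conn e (A :|: B).
Proof.
move=> cA cB cAi cBi.
have lA : A \subset A :|: B by apply: subsetUl.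
have lB : B \subset A :|: B by apply: subsetUr.
have H : forall u, u \in A :|: B -> connect (induced e (A :|: B)) u c.
  move=> u; rewrite inE => /orP[uA|uB].
    exact: conn_lift lA (cA _ _ uA cAi).
  exact: conn_lift lB (cB _ _ uB cBi).
have H' : forall u, u \in A :|: B -> connect (induced e (A :|: B)) c u.
  move=> u; rewrite inE => /orP[uA|uB].
    exact: conn_lift lA (cA _ _ cAi uA).
  exact: conn_lift lB (cB _ _ cBi uB).
move=> x y xS yS; apply: connect_trans (H x xS) (H' y yS).
Qed.

Lemma cross (T : eqType) (e : rel T) (P : pred T) p : forall x,
  path e x p -> P x -> ~~ P (last x p) ->
  exists x' y', [/\ e x' y', P x', ~~ P y', x' \in x :: p & y' \in x :: p].
Proof.
elim: p => [|a p IH] x /=; first by move=> _ ->.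
move=> /andP[exa pa] Px HL; case Pa: (P a).
  have [x' [y' [H1 H2 H3 H4 H5]]] := IH a pa Pa HL; exists x', y'.
  by split=> //; rewrite in_cons; apply/orP; right.
by exists x, a; rewrite Pa exa Px !in_cons !eqxx !orbT.
Qed.

Lemma helly (T : finType) (e : rel T) (sym : forall x y, e x y = e y x)
  (acyc : forall p : seq T, uniq p -> 3 <= size p -> ~~ cycle e p)
  (A B C : {set T}) a b c :
  conn e A -> conn e B -> conn e C ->
  a \in B -> a \in C -> b \in A -> b \in C -> c \in A -> c \in B ->
  exists w, [/\ w \in A, w \in B & w \in C].
Proof.
move=> cA cB cC aB aC bA bC cA' cB'.
case bB: (b \in B); first by exists b.
have cAB := conn_union cA cB cA' cB'.
have [P [HP LP UP AP]] := exists_path cC aC bC.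
have AP' : all (mem (A :|: B)) P.
  apply: (in_path sym acyc cAB _ _ HP UP); first by rewrite inE aB orbT.
  by rewrite LP inE bA.
have nb : ~~ (last a P \in B) by rewrite LP bB.
have [x' [y' [exy x'B y'B x'in y'in]]] := cross (P := fun t => t \in B) HP aB nb.
have x'C : x' \in C by move: x'in; rewrite in_cons => /orP[/eqP->//|/(allP AP)].
case x'A: (x' \in A); first by exists x'.
exfalso.
have y'A : y' \in A.
  move: y'in; rewrite in_cons => /orP[/eqP E|/(allP AP')]; first by rewrite E aB in y'B.
  by rewrite /= inE (negbTE y'B) orbF.
have [Q [HQ LQ UQ AQ]] := exists_path cB x'B cB'.
have : all (mem A) (x' :: Q).
  apply: (in_path sym acyc cA y'A); rewrite /= ?LQ //.
    by rewrite sym exy.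
  move: UQ => /= ->; rewrite andbT in_cons negb_or; apply/andP; split.
    by apply/eqP => E; rewrite E x'B in y'B.
  by apply/negP => /(allP AQ) /= yB; rewrite yB in y'B.
by rewrite /= x'A.
Qed.

Definition U (T : finType) (phi : nat * nat -> {set T}) (ell m k : nat) : {set T} :=
  [set t | has (fun i => t \in phi (ell, i)) (iota m k)].

Lemma memU (T : finType) (phi : nat * nat -> {set T}) ell m k t :
  reflect (exists2 i, m <= i < m + k & t \in phi (ell, i)) (t \in U phi ell m k).
Proof.
rewrite inE; apply: (iffP hasP) => [[i Hi Ht]|[i Hi Ht]]; exists i; rewrite ?mem_iota //.
by rewrite mem_iota in Hi.
Qed.

Lemma U_conn (T : finType) (e : rel T) (phi : nat * nat -> {set T}) ell n :
  (forall i, i < n -> conn e (phi (ell, i))) ->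
  (forall i, i.+1 < n -> exists t, (t \in phi (ell, i)) && (t \in phi (ell, i.+1))) ->
  forall k m, 0 < k -> m + k <= n -> conn e (U phi ell m k).
Proof.
move=> cphi adj; elim=> [//|k IH] m _ Hmk.
case: k IH Hmk => [|k] IH Hmk.
  have -> : U phi ell m 1 = phi (ell, m) by apply/setP => t; rewrite inE /= orbF.
  apply: cphi; lia.
have -> : U phi ell m k.+2 = phi (ell, m) :|: U phi ell m.+1 k.+1.
  by apply/setP => t; rewrite !inE.
have [t /andP[t1 t2]] := adj m ltac:(lia).
apply: (conn_union (c := t)) => //.
- apply: cphi; lia.
- apply: IH => //; lia.
- apply/memU; exists m.+1 => //; lia.
Qed.

Theorem mainTheorem3 (L ell : nat) (hell : 2 <= ell) (hL : ell <= L)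
    (T : finType) (e : rel T) (phi : nat * nat -> {set T}) :
  tree_decomp L e phi ->
  exists w : T, exists i j : nat,
    [/\ i < j, j < 2 ^ ell, w \in phi (ell, i), w \in phi (ell, j) &
        2 ^ (ell - 2) <= minn (j - i) (2 ^ ell + i - j)].
Proof.
case=> [[_ _ sym _ acyc] sub adj].
set d := 2 ^ (ell - 2).
have hn : 2 ^ ell = 4 * d.
  by rewrite /d -{1}(subnK hell) expnD mulnC.
have d0 : 0 < d by rewrite expn_gt0.
rewrite hn.
have cphi : forall i, i < 4 * d -> conn e (phi (ell, i)).
  move=> i hi; have [] := sub (ell, i); first by rewrite /rt_vertex /= hL hn hi.
  by move=> _ H.
have adjI : forall i j, i < 4 * d -> j < 4 * d -> rt_edge_dir (ell, i) (ell, j) ->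
    exists t, (t \in phi (ell, i)) && (t \in phi (ell, j)).
  move=> i j hi hj hij; have := adj (ell, i) (ell, j).
  rewrite /rt_adj /rt_vertex /= hL hn hi hj hij /= => /(_ isT) /set0Pn [t].
  by rewrite inE => ht; exists t.
have adjS : forall i, i.+1 < 4 * d -> exists t, (t \in phi (ell, i)) && (t \in phi (ell, i.+1)).
  move=> i hi; apply: adjI; try lia.
  by rewrite /rt_edge_dir /= eqxx hn modn_small // eqxx orbT.
have adjW : exists t, (t \in phi (ell, (4 * d).-1)) && (t \in phi (ell, 0)).
  apply: adjI; try lia.
  rewrite /rt_edge_dir /= eqxx hn.
  have -> : ((4 * d).-1).+1 = 4 * d by lia.
  by rewrite modnn orbT.
have cU := U_conn cphi adjS.
have [c /andP[c1 c2]] := adjS d.-1 ltac:(lia).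
have [a /andP[a1 a2]] := adjS (2 * d).-1 ltac:(lia).
have [b /andP[b1 b2]] := adjW.
have [w [wA wB wC]] := helly sym acyc (A := U phi ell 0 d) (B := U phi ell d d)
  (C := U phi ell (2 * d) (2 * d)) (a := a) (b := b) (c := c)
  (cU d 0 d0 ltac:(lia)) (cU d d d0 ltac:(lia)) (cU (2 * d) (2 * d) ltac:(lia) ltac:(lia))
  ltac:(apply/memU; exists (2 * d).-1 => //; lia)
  ltac:(apply/memU; exists (2 * d) => //; [lia | by have -> : (2 * d) = ((2 * d).-1).+1 by lia])
  ltac:(apply/memU; exists 0 => //; lia)
  ltac:(apply/memU; exists (4 * d).-1 => //; lia)
  ltac:(apply/memU; exists d.-1 => //; lia)
  ltac:(apply/memU; exists d => //; [lia | by have -> : d = d.-1.+1 by lia]).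
case/memU: wA => x hx wx; case/memU: wB => y hy wy; case/memU: wC => z hz wz.
exists w.
case: (leqP d (y - x)) => h1.
  exists x, y; split=> //; lia.
case: (leqP d (z - y)) => h2.
  exists y, z; split=> //; lia.
exists x, z; split=> //; lia.
Qed.
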